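(* For every real $t\geq 1$: $C(t)>0$ if and only if $t<\vartheta^-(G)$.
   Context: Let $G$ be a simple graph with vertex set $V=\{1,\dots,n\}$, edge set $E$ and adjacency matrix $A$. Let $e$ denote the all-ones vector, $\langle M,N\rangle=\operatorname{trace}(M^TN)$, and $Y\geq 0$ mean entrywise nonnegativity. For real $t\geq 1$, $P(t)$ is the semidefinite program $$\min \tfrac12\langle A,Y\rangle \ \text{ s.t. } \begin{pmatrix} Y & e\\ e^T & t\end{pmatrix}\succeq 0,\ \operatorname{diag}(Y)=e,\ Y\geq 0,$$ over symmetric $n\times n$ matrices $Y$, and $C(t)$ denotes its optimal value. Szegedy's number is $$\vartheta^-(G)=\min\ t \ \text{ s.t. } \begin{pmatrix} Y & e\\ e^T & t\end{pmatrix}\succeq 0,\ \operatorname{diag}(Y)=e,\ Y_{i,j}=0\ \forall [i,j]\in E,\ Y\geq 0.$$ *)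

(* Defs.v *)
From HB Require Import structures.
From mathcomp Require Import all_boot all_order all_algebra.
From mathcomp Require Import boolp classical_sets reals.
Set Implicit Arguments. Unset Strict Implicit. Unset Printing Implicit Defensive.
Import Order.TTheory GRing.Theory Num.Theory.
Local Open Scope ring_scope.
Local Open Scope classical_set_scope.

(* A simple graph on V = 'I_n (vertices 0..n-1 standing for 1..n):
   a symmetric irreflexive boolean relation. *)
Definition simple_graph (n : nat) (adj : rel 'I_n) : Prop :=
  (forall i, ~~ adj i i) /\ (forall i j, adj i j = adj j i).

Definition adjmx (R : realType) (n : nat) (adj : rel 'I_n) : 'M[R]_n :=
  \matrix_(i, j) (adj i j)%:R.

Definition psd (R : realType) (m : nat) (M : 'M[R]_m) : Prop :=
  M^T = M /\ forall x : 'cV[R]_m, 0 <= (x^T *m M *m x) ord0 ord0.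

Definition frob (R : realType) (n : nat) (M N : 'M[R]_n) : R := \tr (M^T *m N).

Definition onesv (R : realType) (n : nat) : 'cV[R]_n := const_mx 1.

Definition border (R : realType) (n : nat) (Y : 'M[R]_n) (t : R) : 'M[R]_(n + 1) :=
  block_mx Y (onesv R n) (onesv R n)^T (t%:M : 'M[R]_1).

Definition feasP (R : realType) (n : nat) (t : R) (Y : 'M[R]_n) : Prop :=
  Y^T = Y /\ psd (border Y t) /\ (forall i, Y i i = 1) /\ (forall i j, 0 <= Y i j).

(* optimal value C(t) of P(t) (the minimum; expressed as an infimum) *)
Definition Cval (R : realType) (n : nat) (adj : rel 'I_n) (t : R) : R :=
  inf [set v | exists Y, feasP t Y /\ v = (1/2) * frob (adjmx R adj) Y].

(* Szegedy's number theta^-(G) (the minimum; expressed as an infimum) *)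
Definition theta_minus (R : realType) (n : nat) (adj : rel 'I_n) : R :=
  inf [set t | exists Y : 'M[R]_n, feasP t Y /\ (forall i j, adj i j -> Y i j = 0)].

(* Main.v *)
Require Import Defs.
From HB Require Import structures.
From mathcomp Require Import all_boot all_order all_algebra.
From mathcomp Require Import boolp classical_sets reals.
From mathcomp Require Import ring lra.
Import Order.TTheory GRing.Theory Num.Theory.
Set Implicit Arguments. Unset Strict Implicit.
Local Open Scope ring_scope.

Definition QY (R : realType) (n : nat) (Y : 'M[R]_n) (x : 'I_n -> R) : R :=
  \sum_i \sum_j x i * Y i j * x j.

Definition qf (R : realType) (n : nat) (Y : 'M[R]_n) (t : R) (x : 'I_n -> R) (s : R) : R :=
  QY Y x + 2 * s * \sum_i x i + t * s ^+ 2.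

Lemma border_quad (R : realType) (n : nat) (Y : 'M[R]_n) t (x : 'cV[R]_n) (s : R) :
  ((col_mx x (s%:M : 'M_1))^T *m border Y t *m col_mx x (s%:M : 'M_1)) ord0 ord0
  = qf Y t (fun i => x i ord0) s.
Proof.
rewrite /border tr_col_mx mul_row_block mul_row_col !mxE /qf /QY.
rewrite big_ord1 !mxE eqxx mulr1n.
under eq_bigr => j _ do rewrite !mxE big_ord1 !mxE eqxx mulr1n.
under [\sum_j _ * onesv R n _ _]eq_bigr => j _ do rewrite !mxE mulr1.
rewrite big_ord1 !mxE eqxx mulr1n.
under eq_bigr => j _ do rewrite mulrDl mulr1 big_distrl /=.
rewrite big_split /= exchange_big /= -mulr_sumr.
under eq_bigr => i _ do under eq_bigr => j _ do rewrite mxE.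
rewrite expr2; ring.
Qed.

Lemma psd_border (R : realType) (n : nat) (Y : 'M[R]_n) t :
  Y^T = Y -> (psd (border Y t) <-> forall (x : 'I_n -> R) s, 0 <= qf Y t x s).
Proof.
move=> hY; split.
- move=> [_ H] x s.
  have := H (col_mx (\col_i x i) (s%:M)); rewrite border_quad.
  by have -> : (fun i => (\col_j x j) i ord0) = x by apply/funext => i; rewrite mxE.
- move=> H; split.
    by rewrite /border tr_block_mx hY trmxK tr_scalar_mx.
  move=> z; rewrite -(vsubmxK z) (mx11_scalar (dsubmx z)) border_quad; exact: H.
Qed.

Lemma QY_lin (R : realType) (n : nat) (Y Y1 Y2 : 'M[R]_n) a b x :
  (forall i j, Y i j = a * Y1 i j + b * Y2 i j) -> QY Y x = a * QY Y1 x + b * QY Y2 x.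
Proof.
move=> H; rewrite /QY 2!mulr_sumr -big_split; apply: eq_bigr => i _.
rewrite 2!mulr_sumr -big_split; apply: eq_bigr => j _; rewrite H /=; ring.
Qed.

Lemma QY_J (R : realType) (n : nat) x : QY (const_mx 1 : 'M[R]_n) x = (\sum_i x i) ^+ 2.
Proof.
rewrite /QY expr2 big_distrl; apply: eq_bigr => i _; rewrite big_distrr.
by apply: eq_bigr => j _; rewrite mxE mulr1.
Qed.

Lemma QY_I (R : realType) (n : nat) x : QY (1%:M : 'M[R]_n) x = \sum_i x i ^+ 2.
Proof.
rewrite /QY; apply: eq_bigr => i _; rewrite (bigD1 i) //= big1 => [|j /negbTE ji].
  by rewrite !mxE eqxx mulr1n mulr1 addr0 expr2.
by rewrite !mxE eq_sym ji mulr0n mulr0 mul0r.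
Qed.
Definition valA (R : realType) (n : nat) (adj : rel 'I_n) (Y : 'M[R]_n) : R :=
  \sum_i \sum_j (adj i j)%:R * Y i j.

Lemma frobE (R : realType) (n : nat) (adj : rel 'I_n) (Y : 'M[R]_n) :
  frob (adjmx R adj) Y = valA adj Y.
Proof.
rewrite /frob /valA /mxtrace; under eq_bigr => i _ do rewrite mxE.
rewrite exchange_big /=; apply: eq_bigr => i _.
by apply: eq_bigr => j _; rewrite !mxE.
Qed.

Lemma symP (R : realType) (n : nat) (Y : 'M[R]_n) :
  (forall i j, Y i j = Y j i) -> Y^T = Y.
Proof. by move=> H; apply/matrixP => i j; rewrite mxE H. Qed.

Lemma feas_J (R : realType) (n : nat) (t : R) : 1 <= t -> feasP t (const_mx 1 : 'M[R]_n).
Proof.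
move=> t1; have hs : (const_mx 1 : 'M[R]_n)^T = const_mx 1 by apply: symP => i j; rewrite !mxE.
split=> //; split; last by split => [i|i j]; rewrite mxE.
apply/psd_border => // x s; rewrite /qf QY_J.
set u := \sum_i x i.
have h1 := sqr_ge0 (u + s).
have h2 : 0 <= (t - 1) * s ^+ 2 by rewrite mulr_ge0 // ?subr_ge0 ?sqr_ge0.
have -> : u ^+ 2 + 2 * s * u + t * s ^+ 2 = (u + s) ^+ 2 + (t - 1) * s ^+ 2 by ring.
by rewrite addr_ge0.
Qed.

Lemma feas_I (R : realType) (n : nat) : feasP (n%:R) (1%:M : 'M[R]_n).
Proof.
have hs : (1%:M : 'M[R]_n)^T = 1%:M by rewrite tr_scalar_mx.
split=> //; split; last first.
  split => [i|i j]; rewrite !mxE ?eqxx //; by case: (i == j).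
apply/psd_border => // x s.
have -> : qf 1%:M n%:R x s = \sum_i (x i + s) ^+ 2.
  rewrite (eq_bigr (fun i => x i ^+ 2 + (2 * s * x i + s ^+ 2))); last by move=> i _ /=; ring.
  rewrite big_split big_split /= -mulr_sumr sumr_const card_ord /qf QY_I -mulr_natl /=; ring.
by apply: sumr_ge0 => i _; rewrite sqr_ge0.
Qed.

Lemma QY0 (R : realType) (n : nat) (Y : 'M[R]_n) : QY Y (fun _ => 0) = 0.
Proof. by rewrite /QY big1 // => i _; rewrite big1 // => j _; rewrite !mul0r. Qed.

Lemma feas_t_ge0 (R : realType) (n : nat) (t : R) (Y : 'M[R]_n) : feasP t Y -> 0 <= t.
Proof.
move=> [hY [/(psd_border _ hY) H _]].
have := H (fun _ => 0) 1; rewrite /qf QY0 big1 // expr1n; lra.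
Qed.

Lemma feas_mono (R : realType) (n : nat) (t t' : R) (Y : 'M[R]_n) :
  feasP t Y -> t <= t' -> feasP t' Y.
Proof.
move=> [hY [/(psd_border _ hY) H rest]] tt'; split=> //; split=> //.
apply/psd_border => // x s; have := H x s; rewrite /qf.
have : 0 <= (t' - t) * s ^+ 2 by rewrite mulr_ge0 // ?subr_ge0 ?sqr_ge0.
lra.
Qed.

Lemma val_ge0 (R : realType) (n : nat) (adj : rel 'I_n) (t : R) (Y : 'M[R]_n) :
  feasP t Y -> 0 <= valA adj Y.
Proof.
move=> [_ [_ [_ H]]]; apply: sumr_ge0 => i _; apply: sumr_ge0 => j _.
by rewrite mulr_ge0.
Qed.

Lemma val_zero (R : realType) (n : nat) (adj : rel 'I_n) (Y : 'M[R]_n) :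
  (forall i j, adj i j -> Y i j = 0) -> valA adj Y = 0.
Proof.
move=> H; rewrite /valA big1 // => i _; rewrite big1 // => j _.
by case h: (adj i j); [rewrite H // mulr0 | rewrite mul0r].
Qed.
Lemma QY_expand (R : realType) (n : nat) (Y : 'M[R]_n) x :
  QY Y x = \sum_k x k * (\sum_l x l * Y k l).
Proof.
rewrite /QY; apply: eq_bigr => k _; rewrite mulr_sumr; apply: eq_bigr => l _ /=; ring.
Qed.

Lemma Ysym (R : realType) (n : nat) (Y : 'M[R]_n) : Y^T = Y -> forall i j, Y i j = Y j i.
Proof. by move=> hY i j; rewrite -{1}hY mxE. Qed.

Lemma edge_ge2 (R : realType) (n : nat) (adj : rel 'I_n) (t0 : R) (Y : 'M[R]_n) i j :
  simple_graph adj -> feasP t0 Y -> (forall i j, adj i j -> Y i j = 0) -> adj i j -> 2 <= t0.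
Proof.
move=> [irr sym] [hY [/(psd_border _ hY) H [hd hn]]] hz aij.
have nij : (i == j) = false.
  by apply/negbTE; apply/eqP => eij; move: aij; rewrite eij (negbTE (irr j)).
set x := fun k : 'I_n => (k == i)%:R + (k == j)%:R : R.
have sum2 (f : 'I_n -> R) : \sum_k x k * f k = f i + f j.
  rewrite /x; under eq_bigr => k _ do rewrite mulrDl.
  rewrite big_split /= (bigD1 i) //= eqxx mul1r big1 ?addr0; last first.
    by move=> k /negbTE ->; rewrite mul0r.
  rewrite (bigD1 j) //= eqxx mul1r big1 ?addr0 //.
  by move=> k /negbTE ->; rewrite mul0r.
have := H x (-1); rewrite /qf QY_expand.
under eq_bigr => k _ do rewrite (eq_bigr (fun l => x l * Y k l)) // sum2.
rewrite sum2 !hd hz // hz; last by rewrite sym.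
have -> : \sum_k x k = \sum_k x k * 1 by apply: eq_bigr => k _; rewrite mulr1.
rewrite sum2; lra.
Qed.

Lemma perturb (R : realType) (n : nat) (adj : rel 'I_n) (t : R) (Y : 'M[R]_n) :
  simple_graph adj -> feasP t Y ->
  exists Y' : 'M[R]_n, feasP (t * (1 + valA adj Y)) Y' /\ (forall i j, adj i j -> Y' i j = 0).
Proof.
move=> [irr sym] hF; have d0 := val_ge0 adj hF.
move: hF => [hY [/(psd_border _ hY) H [hd hn]]].
set d := valA adj Y.
have d1 : 1 + d != 0 by rewrite gt_eqF // ltr_pwDl.
set c := (1 + d)^-1.
have c0 : 0 <= c by rewrite invr_ge0 addr_ge0.
have sY := Ysym hY.
pose Y' := \matrix_(i, j) ((if adj i j then 0 else Y i j + d * (i == j)%:R) * c).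
pose E := \matrix_(i, j) (if adj i j then Y i j else 0) : 'M[R]_n.
pose D := \matrix_(i, j) (d * (1%:M : 'M[R]_n) i j + (-1) * E i j).
have dec i j : Y' i j = c * Y i j + c * D i j.
  rewrite !mxE; case hij: (adj i j) => /=.
    have -> : (i == j) = false.
      by apply/negbTE; apply/eqP => eij; move: hij; rewrite eij (negbTE (irr j)).
    rewrite mulr0n; ring.
  ring.
have QD x : 0 <= QY D x.
  rewrite (@QY_lin _ _ D 1%:M E d (-1) x); last by move=> i j; rewrite mxE.
  rewrite QY_I.
  set S := \sum_i x i ^+ 2.
  have sq i : x i ^+ 2 <= S.
    rewrite /S (bigD1 i) //= lerDl; apply: sumr_ge0 => k _; exact: sqr_ge0.
  have : QY E x <= d * S.
    rewrite /d /valA mulr_suml /QY; apply: ler_sum => i _; rewrite mulr_suml.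
    apply: ler_sum => j _; rewrite mxE.
    case: (adj i j); rewrite /= ?mul1r ?mul0r ?mulr0 ?mul0r //.
    have hij : x i * x j <= S.
      have := sq i; have := sq j; have := sqr_ge0 (x i - x j); nra.
    have := hn i j; nra.
  lra.
exists Y'; split; last by move=> i j aij; rewrite mxE aij mul0r.
have hY' : Y'^T = Y'.
  apply: symP => i j; rewrite !mxE sym sY eq_sym //.
split=> //; split.
  apply/psd_border => // x s; rewrite /qf (QY_lin x dec).
  have := H x (s * (1 + d)); have := QD x; rewrite /qf => h1 h2.
  have -> : c * QY Y x + c * QY D x + 2 * s * \sum_i x i + t * (1 + d) * s ^+ 2 =
     c * (QY Y x + 2 * (s * (1 + d)) * \sum_i x i + t * (s * (1 + d)) ^+ 2 + QY D x).
    rewrite /c; field; exact: d1.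
  by rewrite mulr_ge0 // addr_ge0.
split=> [i|i j]; rewrite mxE.
  by rewrite (negbTE (irr i)) hd eqxx mulr1 /c mulfV.
by case: (adj i j); rewrite ?mul0r // mulr_ge0 // addr_ge0 // mulr_ge0 //.
Qed.
Lemma mix (R : realType) (n : nat) (adj : rel 'I_n) (t0 t : R) (Y0 : 'M[R]_n) :
  feasP t0 Y0 -> (forall i j, adj i j -> Y0 i j = 0) -> 1 < t0 -> 1 <= t -> t <= t0 ->
  exists Y, feasP t Y /\ valA adj Y = (1 - (t - 1) / (t0 - 1)) * valA adj (const_mx 1 : 'M[R]_n).
Proof.
move=> [hY [/(psd_border _ hY) H [hd hn]]] hz t01 t1 tt0.
have d0 : t0 - 1 != 0 by rewrite subr_eq0 gt_eqF.
set l := (t - 1) / (t0 - 1).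
have l0 : 0 <= l by rewrite divr_ge0 // subr_ge0 // ltW.
have l1 : l <= 1 by rewrite ler_pdivrMr ?subr_gt0 // mul1r lerD2r.
have sY := Ysym hY.
pose Y := \matrix_(i, j) (l * Y0 i j + (1 - l) * (const_mx 1 : 'M[R]_n) i j).
have dec i j : Y i j = l * Y0 i j + (1 - l) * (const_mx 1 : 'M[R]_n) i j by rewrite mxE.
have hY' : Y^T = Y by apply: symP => i j; rewrite !mxE sY.
exists Y; split; last first.
  rewrite /valA mulr_sumr; apply: eq_bigr => i _ /=.
  rewrite mulr_sumr; apply: eq_bigr => j _ /=.
  rewrite dec !mxE; case h: (adj i j); rewrite /= ?mul0r ?hz //; ring.
split=> //; split.
  apply/psd_border => // x s; rewrite /qf (QY_lin x dec) QY_J.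
  have := H x s; rewrite /qf => h1.
  have ht : t = l * (t0 - 1) + 1 by rewrite /l mulfVK // subrK.
  have -> : l * QY Y0 x + (1 - l) * (\sum_i x i) ^+ 2 + 2 * s * \sum_i x i + t * s ^+ 2 =
     l * (QY Y0 x + 2 * s * \sum_i x i + t0 * s ^+ 2) + (1 - l) * (\sum_i x i + s) ^+ 2.
    rewrite ht; ring.
  by rewrite addr_ge0 // mulr_ge0 // ?subr_ge0 // sqr_ge0.
split=> [i|i j]; rewrite !mxE.
  by rewrite hd; ring.
by rewrite addr_ge0 // mulr_ge0 // subr_ge0.
Qed.
Unset Implicit Arguments.
Local Open Scope classical_set_scope.
Theorem mainTheorem5 (R : realType) (n : nat) (adj : rel 'I_n) :
  simple_graph adj ->
  forall t : R, 1 <= t -> (0 < Cval adj t <-> t < theta_minus R adj).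
Proof.
move=> G t t1.
rewrite /Cval /theta_minus.
set SC := (X in 0 < inf X).
set ST := (X in t < inf X).
pose J := (const_mx 1 : 'M[R]_n).
have SCJ : SC ((1/2) * valA adj J) by exists J; split; [exact: feas_J | rewrite frobE].
have SCne : SC !=set0 by exists ((1/2) * valA adj J).
have SClb : lbound SC 0.
  move=> v [Y [hF ->]]; rewrite frobE; apply: mulr_ge0; [lra | exact: (val_ge0 adj hF)].
have STne : ST !=set0.
  exists n%:R; exists 1%:M; split; first exact: feas_I.
  move=> i j aij; rewrite mxE; case: eqP => // eij.
  by move: aij; rewrite eij (negbTE (G.1 j)).
have STlb : lbound ST 0 by move=> u [Z [hF _]]; exact: feas_t_ge0 hF.
have Cge := ge_inf (ex_intro _ 0 SClb).
have Tge := ge_inf (ex_intro _ 0 STlb).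
split.
- move=> Cpos; rewrite ltNge; apply/negP => thle.
  case: (pselect (exists i j, adj i j)) => [[i [j aij]]|noE].
  + have th2 : 2 <= inf ST.
      apply: lb_le_inf => // u [Y [hF hz]]; exact: edge_ge2 G hF hz aij.
    set C := inf SC in Cpos Cge *.
    set K := valA adj J.
    have K0 : 0 <= K by exact: (val_ge0 adj (feas_J n t1)).
    set g := (t - 1) * C / (K + 1).
    have g0 : 0 < g by rewrite /g divr_gt0 ?mulr_gt0 // ?subr_gt0; lra.
    have [t0 [Y0 [hF hz]] t0lt] : exists2 y, ST y & y < inf ST + g.
      by apply: inf_lt => //; rewrite ltrDl.
    have t2 : 2 <= t by lra.
    case: (lerP t0 t) => [t0t | tt0].
      have hv : SC ((1/2) * frob (adjmx R adj) Y0).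
        by exists Y0; split => //; exact: feas_mono hF t0t.
      have := Cge _ hv; rewrite frobE val_zero //; lra.
    have t01 : 1 < t0 by lra.
    have [Y [hFY hv]] := mix hF hz t01 t1 (ltW tt0).
    have hs : SC ((1/2) * frob (adjmx R adj) Y) by exists Y.
    have := Cge _ hs; rewrite frobE hv -/K.
    set m := 1 - (t - 1) / (t0 - 1).
    have d0 : t0 - 1 != 0 by rewrite subr_eq0 gt_eqF.
    have h1 : m * (t0 - 1) = t0 - t by rewrite /m; field.
    have K1 : 0 < K + 1 by lra.
    have h2 : g * (K + 1) = (t - 1) * C by rewrite /g; field; rewrite gt_eqF.
    have hm : 0 <= m.
      by rewrite /m subr_ge0 ler_pdivrMr ?subr_gt0 // mul1r lerD2r ltW.
    have h3 : m * (t - 1) <= m * (t0 - 1) by rewrite ler_wpM2l //; lra.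
    have h4 : m * (t - 1) < g by lra.
    have h5 : m * (t - 1) * (K + 1) < g * (K + 1) by rewrite ltr_pM2r.
    have h6 : (m * (K + 1)) * (t - 1) < C * (t - 1).
      have -> : m * (K + 1) * (t - 1) = m * (t - 1) * (K + 1) by ring.
      lra.
    rewrite ltr_pM2r ?subr_gt0 in h6; last lra.
    have h7 : m * (K + 1) = m * K + m by ring.
    lra.
  + have := Cge _ SCJ; rewrite val_zero; last first.
      by move=> i j aij; exfalso; apply: noE; exists i, j.
    lra.
- move=> tlt; rewrite ltNge; apply/negP => C0.
  set th := inf ST in tlt Tge *.
  set d0 := (th - t) / t.
  have t0 : 0 < t by lra.
  have d0p : 0 < d0 by rewrite divr_gt0 // subr_gt0.
  have td0 : t * d0 = th - t by rewrite /d0 mulrC mulfVK // gt_eqF.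
  have [v [Y [hF ->]] vlt] : exists2 y, SC y & y < d0 / 2.
    by apply: inf_lt => //; lra.
  have [Y' [hF' hz']] := perturb G hF.
  have := Tge _ (ex_intro _ Y' (conj hF' hz')).
  rewrite frobE in vlt.
  have : t * valA adj Y < t * d0 by rewrite ltr_pM2l //; lra.
  lra.
Qed.
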